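(* Let $\lambda=2\cos(\pi/5)$ and let $H_5$ be the subgroup of $SL(2,\mathbb R)$ generated by $S=\begin{pmatrix}0&1\\-1&0\end{pmatrix}$ and $T=\begin{pmatrix}1&\lambda\\0&1\end{pmatrix}$. Suppose that $H(4)$ contains an element $\sigma$ with $\sigma\equiv\begin{pmatrix}1&4\\0&1\end{pmatrix}\pmod{8}$. Then $[H(2^n):H(2^{n+1})]=2^6$ for every integer $n\ge 2$, and $[H_5:H(2^n)]=2^{6(n-2)}[H_5:H(4)]$ for every integer $n\ge2$.
   Context: For $\alpha\in\mathbb Z[\lambda]$, $H(\alpha)=\{(a_{ij})\in H_5 : a_{11}-1,\ a_{22}-1,\ a_{12},\ a_{21}\in \alpha\mathbb Z[\lambda]\}$. Congruence of matrices modulo $8$ means entrywise congruence modulo the ideal $8\mathbb Z[\lambda]$. *)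

(* Defs.v *)
From HB Require Import structures.
From mathcomp Require Import all_boot all_order all_algebra.
From mathcomp Require Import reals trigo.
Set Implicit Arguments. Unset Strict Implicit. Unset Printing Implicit Defensive.
Import Order.TTheory GRing.Theory Num.Theory.
Local Open Scope ring_scope.

Section Hecke.
Variable R : realType.

Definition lam : R := 2 * cos (pi / 5%:R).

Definition in_Zlam (x : R) : Prop := exists a b : int, x = a%:~R + b%:~R * lam.

Definition in_ideal (alpha x : R) : Prop := exists y, in_Zlam y /\ x = alpha * y.

Definition Smx : 'M[R]_2 := \matrix_(i < 2, j < 2)
  (if (i == 0) && (j == 0) then 0 else if (i == 0) then 1
   else if (j == 0) then -1 else 0).
Definition Tmx : 'M[R]_2 := \matrix_(i < 2, j < 2)
  (if i == j then 1 else if (i == 0) then lam else 0).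

Inductive in_H5 : 'M[R]_2 -> Prop :=
| H5_one : in_H5 1%:M
| H5_S x : in_H5 x -> in_H5 (Smx *m x)
| H5_Si x : in_H5 x -> in_H5 (invmx Smx *m x)
| H5_T x : in_H5 x -> in_H5 (Tmx *m x)
| H5_Ti x : in_H5 x -> in_H5 (invmx Tmx *m x).

Definition H (alpha : R) (A : 'M[R]_2) : Prop :=
  [/\ in_H5 A, in_ideal alpha (A 0 0 - 1), in_ideal alpha (A 1 1 - 1),
      in_ideal alpha (A 0 1) & in_ideal alpha (A 1 0)].

Definition mx_congr (alpha : R) (A B : 'M[R]_2) : Prop :=
  forall i j, in_ideal alpha (A i j - B i j).

Definition has_index (G K : 'M[R]_2 -> Prop) (k : nat) : Prop :=
  exists r : 'I_k -> 'M[R]_2, (forall i, G (r i)) /\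
    forall g, G g -> exists! i, K (invmx (r i) *m g).

End Hecke.

(* Main.v *)
Require Import Defs.
From HB Require Import structures.
From mathcomp Require Import all_boot all_order all_algebra.
From mathcomp Require Import reals trigo.
From mathcomp Require Import zify ring lra.
Import Order.TTheory GRing.Theory Num.Theory.
Local Open Scope ring_scope.
Set Implicit Arguments. Unset Strict Implicit. Unset Printing Implicit Defensive.

Lemma int_par (a : int) : exists x : int, a = 2 * x \/ a = 2 * x + 1.
Proof.
exists (a %/ 2)%Z. have := divz_eq a 2. have := modz_ge0 a (isT : (2:int) != 0).
have := ltz_pmod a (isT : (0:int) < 2). lia.
Qed.

Lemma descent (n : nat) (a b : int) : (`|b| <= n)%N -> a * a + a * b - b * b = 0 -> b = 0.
Proof.
elim: n a b => [|n IH] a b hb e; first by lia.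
have [x hx] := int_par a; have [y hy] := int_par b.
case: hx => hx; case: hy => hy; subst; try nia.
have : y = 0 by apply: (IH x y); nia.
lia.
Qed.

Section L.
Variable R : realType.
Local Notation lam := (lam R).

Lemma lam2 : lam ^+ 2 = lam + 1.
Proof.
set c := cos ((pi:R) / 5%:R).
have pi0 := @pi_gt0 R.
have hc0 : 0 < c.
  apply: cos_gt0_pihalf; apply/andP; split.
  - apply: (@lt_le_trans _ _ 0); first by rewrite oppr_lt0 divr_gt0.
    by rewrite divr_ge0 // ltW.
  - lra.
have h2 : cos ((pi:R) / 5%:R *+ 2) = 2 * c ^+ 2 - 1 by rewrite cos_mulr2n -mulr_natl.
have hc2 : 0 < cos ((pi:R) / 5%:R *+ 2).
  apply: cos_gt0_pihalf; apply/andP; split.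
  - apply: (@lt_le_trans _ _ 0); first by rewrite oppr_lt0 divr_gt0.
    by rewrite mulrn_wge0 // divr_ge0 // ltW.
  - rewrite -mulr_natr; lra.
have h4 : cos ((pi:R) / 5%:R *+ 2 *+ 2) = - c.
  have -> : ((pi:R) / 5%:R *+ 2 *+ 2 : R) = - ((pi:R) / 5%:R) + pi.
    by rewrite -mulrnA -mulr_natr; field.
  by rewrite cosDpi cosN.
move: h4; rewrite cos_mulr2n h2 => h4.
have : (c + 1) * ((2 * c - 1) * (4 * c ^+ 2 - 2 * c - 1)) = 0.
  transitivity ((2 * c ^+ 2 - 1) ^+ 2 *+ 2 - 1 + c); first ring.
  by rewrite h4 addNr.
move/eqP; rewrite mulf_eq0 => /orP [|].
  move/eqP => h; lra.
rewrite mulf_eq0 => /orP [/eqP h|/eqP h].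
  move: hc2; rewrite h2. have -> : c ^+ 2 = 1/4.
    have -> : c = 1/2 by lra.
    by rewrite expr2; field.
  lra.
rewrite /Defs.lam -/c. have -> : (2*c)^+2 = 4*c^+2 by ring. lra.
Qed.

Lemma lam_indep (a b : int) : a%:~R + b%:~R * lam = 0 -> a = 0 /\ b = 0.
Proof.
move=> e.
have hR : ((a * a + a * b - b * b)%:~R : R) = 0.
  rewrite !rmorphB !rmorphD !rmorphM /=.
  transitivity ((a%:~R + b%:~R * lam) * (a%:~R + b%:~R - b%:~R * lam) : R).
    have l2 := lam2; ring: l2.
  by rewrite e mul0r.
have hb : b = 0.
  apply: (@descent `|b|%N a b) => //.
  by move/eqP: hR; rewrite intr_eq0 => /eqP.
subst b; split => //; move: e; rewrite mul0r addr0; move/eqP; rewrite intr_eq0 => /eqP //.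
Qed.
End L.
Section Z.
Variable R : realType.
Local Notation lam := (lam R).
Local Notation Zl := (@in_Zlam R).
Local Notation Id := (@in_ideal R).

Lemma Zl_int (z : int) : Zl z%:~R.
Proof. by exists z, 0; rewrite mul0r addr0. Qed.
Lemma Zl_nat (n : nat) : Zl n%:R.
Proof. by exists n, 0; rewrite mul0r addr0. Qed.
Lemma Zl0 : Zl 0. Proof. exact: (Zl_nat 0). Qed.
Lemma Zl1 : Zl 1. Proof. exact: (Zl_nat 1). Qed.
Lemma Zllam : Zl lam. Proof. by exists 0, 1; rewrite mul1r add0r. Qed.
Lemma ZlD x y : Zl x -> Zl y -> Zl (x + y).
Proof. move=> [a [b ->]] [c [d ->]]; exists (a + c), (b + d); rewrite !rmorphD /=; ring. Qed.
Lemma ZlN x : Zl x -> Zl (- x).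
Proof. move=> [a [b ->]]; exists (- a), (- b); rewrite !rmorphN /=; ring. Qed.
Lemma ZlB x y : Zl x -> Zl y -> Zl (x - y).
Proof. by move=> hx hy; apply: ZlD => //; apply: ZlN. Qed.
Lemma ZlMul x y : Zl x -> Zl y -> Zl (x * y).
Proof.
move=> [a [b ->]] [c [d ->]]; exists (a * c + b * d), (a * d + b * c + b * d).
rewrite !rmorphD !rmorphM /=.
have l2 := lam2 R.
transitivity ((a * c)%:~R + ((a * d)%:~R + (b * c)%:~R) * lam + (b * d)%:~R * lam ^+ 2 : R).
  rewrite !rmorphM /=; ring.
rewrite l2 !rmorphM /=; ring.
Qed.
Lemma ZlX x n : Zl x -> Zl (x ^+ n).
Proof. move=> hx; elim: n => [|n IH]; [exact: Zl1| rewrite exprS; exact: ZlMul]. Qed.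
End Z.

Ltac zl := repeat first [ assumption | apply: Zl0 | apply: Zl1 | apply: Zllam
  | apply: ZlD | apply: ZlB | apply: ZlMul | apply: ZlN | apply: ZlX | apply: Zl_nat | apply: Zl_int ].

Section I.
Variable R : realType.
Local Notation lam := (lam R).
Local Notation Zl := (@in_Zlam R).
Local Notation Id := (@in_ideal R).

Lemma IdW m x y : Zl y -> x = m * y -> Id m x.
Proof. by move=> hy ->; exists y. Qed.
Lemma Id0 m : Id m 0.
Proof. by apply: (IdW (y := 0)); [zl | rewrite mulr0]. Qed.
Lemma IdD m x y : Id m x -> Id m y -> Id m (x + y).
Proof. move=> [a [ha ->]] [b [hb ->]]; apply: (IdW (y := a + b)); [zl|ring]. Qed.
Lemma IdN m x : Id m x -> Id m (- x).
Proof. move=> [a [ha ->]]; apply: (IdW (y := - a)); [zl|ring]. Qed.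
Lemma IdB m x y : Id m x -> Id m y -> Id m (x - y).
Proof. by move=> hx hy; apply: IdD => //; apply: IdN. Qed.
Lemma IdMl m z x : Zl z -> Id m x -> Id m (z * x).
Proof. move=> hz [a [ha ->]]; apply: (IdW (y := z * a)); [zl|ring]. Qed.
Lemma IdMr m z x : Zl z -> Id m x -> Id m (x * z).
Proof. by move=> hz hx; rewrite mulrC; apply: IdMl. Qed.
Lemma Id_self m x : Zl x -> Id m (m * x).
Proof. by move=> hx; apply: (IdW hx). Qed.
Lemma Id_weak m k x : Zl k -> Id (m * k) x -> Id m x.
Proof. move=> hk [a [ha ->]]; apply: (IdW (y := k * a)); [zl|ring]. Qed.
Lemma Id_Zl m x : Zl m -> Id m x -> Zl x.
Proof. by move=> hm [a [ha ->]]; zl. Qed.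
Lemma Id_div m k x : m != 0 -> Id (m * k) (m * x) -> Id k x.
Proof.
move=> hm [a [ha e]]; apply: (IdW ha); apply: (mulfI hm); rewrite e; ring.
Qed.
Lemma Id_eq m x y : x = y -> Id m x -> Id m y.
Proof. by move=> ->. Qed.

Definition f2r (e : bool * bool) : R := (e.1 : nat)%:R + (e.2 : nat)%:R * lam.
Lemma Zl_f2r e : Zl (f2r e).
Proof. rewrite /f2r; zl. Qed.

Lemma bits x : Zl x -> exists e, Id 2 (x - f2r e).
Proof.
move=> [a [b ->]].
have [a' ha] := int_par a; have [b' hb] := int_par b.
have hy : Zl (a'%:~R + b'%:~R * lam) by zl.
case: ha => ->; case: hb => ->.
- by exists (false, false); apply: (IdW hy); rewrite /f2r /= ?rmorphD ?rmorphM /=; ring.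
- by exists (false, true); apply: (IdW hy); rewrite /f2r /= ?rmorphD ?rmorphM /=; ring.
- by exists (true, false); apply: (IdW hy); rewrite /f2r /= ?rmorphD ?rmorphM /=; ring.
- by exists (true, true); apply: (IdW hy); rewrite /f2r /= ?rmorphD ?rmorphM /=; ring.
Qed.

Lemma bits_inj e e' : Id 2 (f2r e - f2r e') -> e = e'.
Proof.
case=> y [[a [b ->]]] h.
have key : forall u v : int, (u%:~R + v%:~R * lam = 2 * (a%:~R + b%:~R * lam) :> R) ->
    u = 2 * a /\ v = 2 * b.
  move=> u v huv.
  have : (u - 2 * a)%:~R + (v - 2 * b)%:~R * lam = 0 :> R.
    rewrite !rmorphB !rmorphM /=.
    transitivity (u%:~R + v%:~R * lam - 2 * (a%:~R + b%:~R * lam) : R); first ring.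
    by rewrite huv subrr.
  move/lam_indep => [] h1 h2; split; lia.
have h' : (((e.1 : nat) : int) - ((e'.1 : nat) : int))%:~R
    + (((e.2 : nat) : int) - ((e'.2 : nat) : int))%:~R * lam = 2 * (a%:~R + b%:~R * lam) :> R.
  rewrite -h /f2r !rmorphB /=; ring.
have [h1 h2] := key _ _ h'.
case: e h1 h2 {h h'} => [[] []]; case: e' => [[] []] /= h1 h2; by [] || lia.
Qed.
End I.

Section M.
Variable R : realType.
Local Notation lam := (lam R).
Local Notation Zl := (@in_Zlam R).
Local Notation Id := (@in_ideal R).
Local Notation M := ('M[R]_2).

Definition mk (a b c d : R) : M := \matrix_(i < 2, j < 2)
  (if i == 0 then (if j == 0 then a else b) else (if j == 0 then c else d)).

Lemma ord2P (i : 'I_2) : i = 0 \/ i = 1.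
Proof. by case: i => [[|[|k]] hk] //; [left|right]; apply: val_inj. Qed.

Lemma mk00 a b c d : mk a b c d 0 0 = a. Proof. by rewrite mxE. Qed.
Lemma mk01 a b c d : mk a b c d 0 1 = b. Proof. by rewrite mxE. Qed.
Lemma mk10 a b c d : mk a b c d 1 0 = c. Proof. by rewrite mxE. Qed.
Lemma mk11 a b c d : mk a b c d 1 1 = d. Proof. by rewrite mxE. Qed.

Lemma mkK (A : M) : A = mk (A 0 0) (A 0 1) (A 1 0) (A 1 1).
Proof.
apply/matrixP => i j; rewrite mxE.
by case: (ord2P i) => ->; case: (ord2P j) => ->.
Qed.

Lemma mk_eq a b c d a' b' c' d' : a = a' -> b = b' -> c = c' -> d = d' ->
  mk a b c d = mk a' b' c' d'.
Proof. by move=> -> -> -> ->. Qed.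

Lemma mk_mul a b c d a' b' c' d' : mk a b c d *m mk a' b' c' d' =
  mk (a * a' + b * c') (a * b' + b * d') (c * a' + d * c') (c * b' + d * d').
Proof.
apply/matrixP => i j; rewrite !mxE !big_ord_recl big_ord0 !mxE /=.
by case: (ord2P i) => ->; case: (ord2P j) => ->; rewrite /= addr0.
Qed.

Lemma mk_add a b c d a' b' c' d' : mk a b c d + mk a' b' c' d' =
  mk (a + a') (b + b') (c + c') (d + d').
Proof.
apply/matrixP => i j; rewrite !mxE.
by case: (ord2P i) => ->; case: (ord2P j) => ->.
Qed.

Lemma mk_opp a b c d : - mk a b c d = mk (- a) (- b) (- c) (- d).
Proof.
apply/matrixP => i j; rewrite !mxE.
by case: (ord2P i) => ->; case: (ord2P j) => ->.
Qed.

Lemma mk_sub a b c d a' b' c' d' : mk a b c d - mk a' b' c' d' =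
  mk (a - a') (b - b') (c - c') (d - d').
Proof. by rewrite mk_opp mk_add. Qed.

Lemma mk_scale k a b c d : k *: mk a b c d = mk (k * a) (k * b) (k * c) (k * d).
Proof.
apply/matrixP => i j; rewrite !mxE.
by case: (ord2P i) => ->; case: (ord2P j) => ->.
Qed.

Lemma mk1 : (1%:M : M) = mk 1 0 0 1.
Proof.
apply/matrixP => i j; rewrite !mxE.
by case: (ord2P i) => ->; case: (ord2P j) => ->.
Qed.

Lemma mk1' : (1 : M) = mk 1 0 0 1.
Proof. exact: mk1. Qed.

Lemma det_mk a b c d : \det (mk a b c d) = a * d - b * c.
Proof.
rewrite (expand_det_row _ 0) !big_ord_recl big_ord0 /cofactor !det_mx11 !mxE /=.
by rewrite /bump /= expr0 expr1; ring.
Qed.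

Lemma invmx_eq (A B : M) : A *m B = 1%:M -> invmx A = B.
Proof.
move=> e; have [uA _] := mulmx1_unit e.
by rewrite -[invmx A]mulmx1 -e mulmxA mulVmx // mul1mx.
Qed.

Lemma invmx_mk a b c d : a * d - b * c = 1 -> invmx (mk a b c d) = mk d (- b) (- c) a.
Proof.
move=> e; apply: invmx_eq; rewrite mk_mul mk1; apply: mk_eq; rewrite -?e; ring.
Qed.

Lemma Smk : Smx R = mk 0 1 (-1) 0.
Proof.
apply/matrixP => i j; rewrite !mxE.
by case: (ord2P i) => ->; case: (ord2P j) => ->.
Qed.

Lemma Tmk : Tmx R = mk 1 lam 0 1.
Proof.
apply/matrixP => i j; rewrite !mxE.
by case: (ord2P i) => ->; case: (ord2P j) => ->.
Qed.

Lemma Sinv : invmx (Smx R) = mk 0 (-1) 1 0.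
Proof. rewrite Smk invmx_mk; [apply: mk_eq; ring | ring]. Qed.
Lemma Tinv : invmx (Tmx R) = mk 1 (- lam) 0 1.
Proof. rewrite Tmk invmx_mk; [apply: mk_eq; ring | ring]. Qed.

Definition ZlM (A : M) := forall i j, Zl (A i j).
Definition IdM m (A : M) := forall i j, Id m (A i j).
Definition cg m (A B : M) := IdM m (A - B).

Lemma ZlM_mk a b c d : Zl a -> Zl b -> Zl c -> Zl d -> ZlM (mk a b c d).
Proof. by move=> ha hb hc hd i j; rewrite mxE; case: (ord2P i) => ->; case: (ord2P j) => ->. Qed.
Lemma IdM_mk m a b c d : Id m a -> Id m b -> Id m c -> Id m d -> IdM m (mk a b c d).
Proof. by move=> ha hb hc hd i j; rewrite mxE; case: (ord2P i) => ->; case: (ord2P j) => ->. Qed.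

Lemma ZlM_mul A B : ZlM A -> ZlM B -> ZlM (A *m B).
Proof.
move=> hA hB; rewrite (mkK A) (mkK B) mk_mul.
have := hA 0 0; have := hA 0 1; have := hA 1 0; have := hA 1 1.
have := hB 0 0; have := hB 0 1; have := hB 1 0; have := hB 1 1.
move=> *; apply: ZlM_mk; zl.
Qed.

Lemma IdM_mull m A B : ZlM A -> IdM m B -> IdM m (A *m B).
Proof.
move=> hA hB; rewrite (mkK A) (mkK B) mk_mul.
have := hA 0 0; have := hA 0 1; have := hA 1 0; have := hA 1 1.
have := hB 0 0; have := hB 0 1; have := hB 1 0; have := hB 1 1.
move=> *; apply: IdM_mk; apply: IdD; apply: IdMl => //.
Qed.

Lemma IdM_mulr m A B : IdM m A -> ZlM B -> IdM m (A *m B).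
Proof.
move=> hA hB; rewrite (mkK A) (mkK B) mk_mul.
have := hA 0 0; have := hA 0 1; have := hA 1 0; have := hA 1 1.
have := hB 0 0; have := hB 0 1; have := hB 1 0; have := hB 1 1.
move=> *; apply: IdM_mk; apply: IdD; apply: IdMr => //.
Qed.

Lemma IdM_add m A B : IdM m A -> IdM m B -> IdM m (A + B).
Proof. by move=> hA hB i j; rewrite mxE; apply: IdD. Qed.
Lemma IdM_opp m A : IdM m A -> IdM m (- A).
Proof. by move=> hA i j; rewrite mxE; apply: IdN. Qed.
Lemma IdM_sub m A B : IdM m A -> IdM m B -> IdM m (A - B).
Proof. by move=> hA hB; apply: IdM_add => //; apply: IdM_opp. Qed.
Lemma IdM0 m : IdM m 0.
Proof. by move=> i j; rewrite mxE; apply: Id0. Qed.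
Lemma IdM_scale m A : ZlM A -> IdM m (m *: A).
Proof. by move=> hA i j; rewrite mxE; apply: Id_self. Qed.
Lemma IdM_scalel m k A : Zl k -> IdM m A -> IdM m (k *: A).
Proof. by move=> hk hA i j; rewrite mxE; apply: IdMl. Qed.
Lemma IdM_weak m k A : Zl k -> IdM (m * k) A -> IdM m A.
Proof. by move=> hk hA i j; apply: Id_weak (hA i j). Qed.
Lemma ZlM_add A B : ZlM A -> ZlM B -> ZlM (A + B).
Proof. by move=> hA hB i j; rewrite mxE; apply: ZlD. Qed.
Lemma ZlM_opp A : ZlM A -> ZlM (- A).
Proof. by move=> hA i j; rewrite mxE; apply: ZlN. Qed.
Lemma ZlM_sub A B : ZlM A -> ZlM B -> ZlM (A - B).
Proof. by move=> hA hB; apply: ZlM_add => //; apply: ZlM_opp. Qed.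
Lemma ZlM_scale k A : Zl k -> ZlM A -> ZlM (k *: A).
Proof. by move=> hk hA i j; rewrite mxE; apply: ZlMul. Qed.
Lemma ZlM1 : ZlM 1%:M.
Proof. rewrite mk1; apply: ZlM_mk; zl. Qed.
Lemma ZlM_IdM m A : Zl m -> IdM m A -> ZlM A.
Proof. by move=> hm hA i j; apply: Id_Zl (hA i j). Qed.

Lemma cg_refl m A : cg m A A.
Proof. by rewrite /cg subrr; apply: IdM0. Qed.
Lemma cg_sym m A B : cg m A B -> cg m B A.
Proof. by rewrite /cg => h; rewrite -opprB; apply: IdM_opp. Qed.
Lemma cg_trans m A B C : cg m A B -> cg m B C -> cg m A C.
Proof.
rewrite /cg => h1 h2; have -> : A - C = (A - B) + (B - C) by rewrite addrA subrK.
exact: IdM_add.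
Qed.
Lemma cg_add m A B C D : cg m A B -> cg m C D -> cg m (A + C) (B + D).
Proof.
rewrite /cg => h1 h2; have -> : A + C - (B + D) = (A - B) + (C - D).
  by rewrite opprD addrACA.
exact: IdM_add.
Qed.
Lemma cg_mul m A B C D : ZlM B -> ZlM C -> cg m A B -> cg m C D -> cg m (A *m C) (B *m D).
Proof.
rewrite /cg => hB hC h1 h2.
have -> : A *m C - B *m D = (A - B) *m C + B *m (C - D).
  by rewrite mulmxBl mulmxBr addrA subrK.
apply: IdM_add; [exact: IdM_mulr | exact: IdM_mull].
Qed.
Lemma cg_weak m k A B : Zl k -> cg (m * k) A B -> cg m A B.
Proof. by move=> hk; apply: IdM_weak. Qed.
End M.

Section G.
Variable R : realType.
Local Notation lam := (lam R).
Local Notation Zl := (@in_Zlam R).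
Local Notation Id := (@in_ideal R).
Local Notation M := ('M[R]_2).
Local Notation H5 := (@in_H5 R).

Lemma invmxM (A B : M) : A \in unitmx -> B \in unitmx ->
  invmx (A *m B) = invmx B *m invmx A.
Proof.
move=> uA uB; apply: invmx_eq.
by rewrite mulmxA -(mulmxA A) mulmxV // mulmx1 mulmxV.
Qed.

Lemma H5_mul A B : H5 A -> H5 B -> H5 (A *m B).
Proof.
move=> hA hB; elim: hA => [|x _ IH|x _ IH|x _ IH|x _ IH].
- by rewrite mul1mx.
- by rewrite -mulmxA; apply: H5_S.
- by rewrite -mulmxA; apply: H5_Si.
- by rewrite -mulmxA; apply: H5_T.
- by rewrite -mulmxA; apply: H5_Ti.
Qed.

Lemma H5_1 : H5 1. Proof. exact: H5_one. Qed.
Lemma H5S : H5 (Smx R). Proof. by rewrite -[Smx R]mulmx1; apply: H5_S; apply: H5_one. Qed.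
Lemma H5Si : H5 (invmx (Smx R)). Proof. by rewrite -[invmx _]mulmx1; apply: H5_Si; apply: H5_one. Qed.
Lemma H5T : H5 (Tmx R). Proof. by rewrite -[Tmx R]mulmx1; apply: H5_T; apply: H5_one. Qed.
Lemma H5Ti : H5 (invmx (Tmx R)). Proof. by rewrite -[invmx _]mulmx1; apply: H5_Ti; apply: H5_one. Qed.

Lemma H5_ZlM A : H5 A -> ZlM A.
Proof.
elim=> [|x _ IH|x _ IH|x _ IH|x _ IH]; first exact: ZlM1;
  apply: ZlM_mul => //; rewrite ?Sinv ?Tinv ?Smk ?Tmk; apply: ZlM_mk; zl.
Qed.

Lemma detS : \det (Smx R) = 1. Proof. rewrite Smk det_mk; ring. Qed.
Lemma detT : \det (Tmx R) = 1. Proof. rewrite Tmk det_mk; ring. Qed.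

Lemma H5_det A : H5 A -> \det A = 1.
Proof.
elim=> [|x _ IH|x _ IH|x _ IH|x _ IH]; first exact: det1;
  by rewrite det_mulmx IH mulr1 ?det_inv ?detS ?detT ?invr1.
Qed.

Lemma H5_unit A : H5 A -> A \in unitmx.
Proof. by move=> h; rewrite unitmxE (H5_det h) unitr1. Qed.

Lemma H5_inv A : H5 A -> H5 (invmx A).
Proof.
move=> h; elim: h => [|x hx IH|x hx IH|x hx IH|x hx IH].
- by rewrite invmx1; apply: H5_one.
- by rewrite invmxM ?(H5_unit hx) ?(H5_unit H5S) //; apply: H5_mul => //; apply: H5Si.
- by rewrite invmxM ?(H5_unit hx) ?(H5_unit H5Si) // invmxK; apply: H5_mul => //; apply: H5S.
- by rewrite invmxM ?(H5_unit hx) ?(H5_unit H5T) //; apply: H5_mul => //; apply: H5Ti.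
- by rewrite invmxM ?(H5_unit hx) ?(H5_unit H5Ti) // invmxK; apply: H5_mul => //; apply: H5T.
Qed.
End G.

Section HH.
Variable R : realType.
Local Notation lam := (lam R).
Local Notation Zl := (@in_Zlam R).
Local Notation Id := (@in_ideal R).
Local Notation M := ('M[R]_2).
Local Notation H5 := (@in_H5 R).

Lemma HE m (A : M) : H m A <-> H5 A /\ IdM m (A - 1%:M).
Proof.
split.
- case=> h5 h00 h11 h01 h10; split => // i j; rewrite !mxE.
  by case: (ord2P i) => ->; case: (ord2P j) => ->; rewrite /= ?subr0.
- case=> h5 h; split => //.
  + by have := h 0 0; rewrite !mxE.
  + by have := h 1 1; rewrite !mxE.
  + by have := h 0 1; rewrite !mxE subr0.
  + by have := h 1 0; rewrite !mxE subr0.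
Qed.

Lemma H_H5 (m : R) (A : M) : H m A -> H5 A.
Proof. by case. Qed.

Lemma H_one (m : R) : H m 1%:M.
Proof. by apply/HE; split; [apply: H5_one | rewrite subrr; apply: IdM0]. Qed.

Lemma H_mul (m : R) (A B : M) : H m A -> H m B -> H m (A *m B).
Proof.
move=> /HE [hA iA] /HE [hB iB]; apply/HE; split; first exact: H5_mul.
have -> : A *m B - 1%:M = (A - 1%:M) *m B + (B - 1%:M).
  by rewrite mulmxBl mul1mx addrA subrK.
apply: IdM_add => //; apply: IdM_mulr => //; exact: H5_ZlM.
Qed.

Lemma H_inv (m : R) (A : M) : H m A -> H m (invmx A).
Proof.
move=> /HE [hA iA]; apply/HE; split; first exact: H5_inv.
have -> : invmx A - 1%:M = - (invmx A *m (A - 1%:M)).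
  by rewrite mulmxBr mulVmx ?H5_unit // mulmx1 opprB.
apply: IdM_opp; apply: IdM_mull => //; apply: H5_ZlM; exact: H5_inv.
Qed.

Lemma H_conj (m : R) (g A : M) : H5 g -> H m A -> H m (g *m A *m invmx g).
Proof.
move=> hg /HE [hA iA]; apply/HE; split.
  by apply: H5_mul; [apply: H5_mul|apply: H5_inv].
have -> : g *m A *m invmx g - 1%:M = g *m (A - 1%:M) *m invmx g.
  by rewrite mulmxBr mulmxBl mulmx1 mulmxV ?H5_unit.
apply: IdM_mulr; [apply: IdM_mull => //; exact: H5_ZlM | apply: H5_ZlM; exact: H5_inv].
Qed.

Lemma H_weak (m k : R) (A : M) : Zl k -> H (m * k) A -> H m A.
Proof. by move=> hk /HE [h i]; apply/HE; split => //; apply: IdM_weak i. Qed.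

Lemma H_coset (m : R) (r g : M) : H5 r -> H5 g -> (H m (invmx r *m g) <-> cg m g r).
Proof.
move=> hr hg; split.
- move=> /HE [_ i]; rewrite /cg.
  have -> : g - r = r *m (invmx r *m g - 1%:M).
    by rewrite mulmxBr mulmxA mulmxV ?H5_unit // mul1mx mulmx1.
  apply: IdM_mull => //; exact: H5_ZlM.
- move=> i; apply/HE; split; first by apply: H5_mul => //; apply: H5_inv.
  have -> : invmx r *m g - 1%:M = invmx r *m (g - r).
    by rewrite mulmxBr mulVmx ?H5_unit.
  apply: IdM_mull => //; apply: H5_ZlM; exact: H5_inv.
Qed.

Definition Cls := ((bool * bool) * (bool * bool) * (bool * bool))%type.
Definition Ec (c : Cls) : M := mk (f2r R c.1.1) (f2r R c.1.2) (f2r R c.2) (f2r R c.1.1).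

Lemma Zl2n n : Zl (2%:R ^+ n). Proof. zl. Qed.

Lemma Id_scale2 (q x : R) : Id 2 x -> Id (q * 2) (q * x).
Proof. case=> y [hy ->]; apply: (IdW hy); ring. Qed.

Lemma classB n (g : M) : (1 <= n)%N -> H (2%:R ^+ n) g ->
  exists c, cg (2%:R ^+ n.+1) g (1%:M + 2%:R ^+ n *: Ec c).
Proof.
case: n => // n _ hg; have hdet := H5_det (H_H5 hg).
move: hg => /HE [h5 i]; move: hdet i; rewrite (mkK g) mk1 mk_sub det_mk.
set a := g 0 0; set b := g 0 1; set c := g 1 0; set d := g 1 1.
move=> hdet i.
have := i 0 0; have := i 0 1; have := i 1 0; have := i 1 1; rewrite !mxE /=.
set q := 2%:R ^+ n.+1.
move=> [d' [hd ed]] [c' [hc ec]] [b' [hb eb]] [a' [ha ea]].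
have qn0 : q != 0 by rewrite expf_neq0 // pnatr_eq0.
have ea' : a = 1 + q * a' by rewrite -ea; ring.
have ed' : d = 1 + q * d' by rewrite -ed; ring.
have eb' : b = q * b' by rewrite -eb; ring.
have ec' : c = q * c' by rewrite -ec; ring.
have ht : Id 2 (a' + d').
  apply: (IdW (y := - (2%:R ^+ n * (a' * d' - b' * c')))); first by zl.
  apply: (mulfI qn0).
  rewrite ea' ed' eb' ec' in hdet.
  rewrite /q exprS in hdet *.
  rewrite -[X in X = _](subr0) -{1}(subrr 1) -[X in _ - (X - _)]hdet. ring.
have [e1 h1] := bits ha; have [e2 h2] := bits hb; have [e3 h3] := bits hc.
exists (e1, e2, e3); rewrite /cg /Ec ?mk1 mk_scale mk_add mk_sub /=.
rewrite exprSr; apply: IdM_mk.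
- rewrite -/q; apply: (Id_eq (x := q * (a' - f2r R e1))); first by rewrite ea'; ring.
  exact: Id_scale2.
- rewrite -/q; apply: (Id_eq (x := q * (b' - f2r R e2))); first by rewrite eb'; ring.
  exact: Id_scale2.
- rewrite -/q; apply: (Id_eq (x := q * (c' - f2r R e3))); first by rewrite ec'; ring.
  exact: Id_scale2.
- rewrite -/q; apply: (Id_eq (x := q * ((a' + d') - (a' - f2r R e1) - 2 * f2r R e1))); first by rewrite ed'; ring.
  apply: Id_scale2; apply: IdB; [exact: IdB | apply: Id_self; exact: Zl_f2r].
Qed.

Lemma classC n c c' : cg (2%:R ^+ n.+1) (1%:M + 2%:R ^+ n *: Ec c) (1%:M + 2%:R ^+ n *: Ec c') -> c = c'.
Proof.
rewrite /cg /Ec mk1 !mk_scale !mk_add mk_sub exprSr => h.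
have qn0 : (2%:R ^+ n : R) != 0 by rewrite expf_neq0 // pnatr_eq0.
have := h 0 0; have := h 0 1; have := h 1 0; rewrite !mxE /= => h3 h2 h1.
case: c h1 h2 h3 {h} => [[e1 e2] e3]; case: c' => [[e1' e2'] e3'] /= h1 h2 h3.
have k : forall z x y, Id (2%:R ^+ n * 2) (z + 2%:R ^+ n * x - (z + 2%:R ^+ n * y)) -> Id 2 (x - y).
  move=> z x y hxy; apply: (Id_div qn0); apply: Id_eq hxy; ring.
by rewrite (bits_inj (k _ _ _ h1)) (bits_inj (k _ _ _ h2)) (bits_inj (k _ _ _ h3)).
Qed.
End HH.

Section Q.
Variable R : realType.
Local Notation lam := (lam R).
Local Notation Zl := (@in_Zlam R).
Local Notation Id := (@in_ideal R).
Local Notation M := ('M[R]_2).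
Local Notation H5 := (@in_H5 R).
Local Notation Ec := (@Ec R).

Lemma IdM_ex m (A : M) : IdM m A -> exists X, ZlM X /\ A = m *: X.
Proof.
move=> h; have := h 0 0; have := h 0 1; have := h 1 0; have := h 1 1.
move=> [d [hd ed]] [c [hc ec]] [b [hb eb]] [a [ha ea]].
exists (mk a b c d); split; first by apply: ZlM_mk.
by rewrite mk_scale [A]mkK -ea -eb -ec -ed.
Qed.

Lemma IdM_scale2 q (A : M) : IdM 2 A -> IdM (q * 2) (q *: A).
Proof. by move=> h i j; rewrite mxE; apply: Id_scale2. Qed.

Lemma ZlM_Ec c : ZlM (Ec c).
Proof. apply: ZlM_mk; apply: Zl_f2r. Qed.

Lemma step n r c : (2 <= n)%N -> H (2%:R ^+ n) r ->
  cg (2%:R ^+ n.+1) r (1%:M + 2%:R ^+ n *: Ec c) ->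
  H (2%:R ^+ n.+1) (r *m r) /\ cg (2%:R ^+ n.+2) (r *m r) (1%:M + 2%:R ^+ n.+1 *: Ec c).
Proof.
case: n => [|[|m]] // _ hr hc.
have h5 := H_H5 hr.
move: hc => /IdM_ex [Y [hY eY]].
have er : r = 1%:M + 2%:R ^+ m.+2 *: Ec c + 2%:R ^+ m.+3 *: Y by rewrite -eY addrC subrK.
set X := Ec c + 2%:R *: Y.
have hX : ZlM X by apply: ZlM_add; [exact: ZlM_Ec | apply: ZlM_scale => //; zl].
have key : cg (2%:R ^+ m.+4) (r *m r) (1%:M + 2%:R ^+ m.+3 *: Ec c).
  rewrite /cg; have -> : r *m r - (1%:M + 2%:R ^+ m.+3 *: Ec c) =
     2%:R ^+ m.+4 *: (Y + 2%:R ^+ m *: (X *m X)).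
    rewrite er /X /Ec [Y]mkK mk1 !mk_scale !mk_add !mk_mul !mk_scale !mk_add mk_sub.
    rewrite !(mk_scale, mk_add, mk_mul, mk_sub); apply: mk_eq; rewrite !exprS; ring.
  apply: IdM_scale; apply: ZlM_add => //; apply: ZlM_scale; [zl | exact: ZlM_mul].
split => //.
apply/HE; split; first exact: H5_mul.
have -> : r *m r - 1%:M = (r *m r - (1%:M + 2%:R ^+ m.+3 *: Ec c)) + 2%:R ^+ m.+3 *: Ec c.
  by rewrite opprD addrA subrK.
apply: IdM_add; first by apply: (IdM_weak (k := 2%:R)); [zl | rewrite -exprSr].
apply: IdM_scale; exact: ZlM_Ec.
Qed.
End Q.

Section B.
Variable R : realType.
Local Notation lam := (lam R).
Local Notation Zl := (@in_Zlam R).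
Local Notation Id := (@in_ideal R).
Local Notation M := ('M[R]_2).
Local Notation H5 := (@in_H5 R).
Local Notation Ec := (@Ec R).
Local Notation q4 := (2%:R ^+ 2 : R).
Local Notation q8 := (2%:R ^+ 3 : R).

Definition Q (X : M) := exists g, H q4 g /\ cg q8 g (1%:M + q4 *: X).

Lemma Q0 : Q (mk 0 0 0 0).
Proof.
exists 1%:M; split; first exact: H_one.
rewrite /cg mk_scale mk1 mk_add mk_sub; apply: IdM_mk;
  apply: (IdW (y := 0)); try zl; ring.
Qed.

Lemma Q_add X Y : ZlM X -> ZlM Y -> Q X -> Q Y -> Q (X + Y).
Proof.
move=> hX hY [g [hg cgg]] [h [hh cgh]]; exists (g *m h); split; first exact: H_mul.
apply: (@cg_trans _ _ _ ((1%:M + q4 *: X) *m (1%:M + q4 *: Y))).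
  apply: cg_mul => //; last exact: H5_ZlM (H_H5 hh).
  apply: ZlM_add; [exact: ZlM1 | apply: ZlM_scale => //; zl].
rewrite /cg; have -> : (1%:M + q4 *: X) *m (1%:M + q4 *: Y) - (1%:M + q4 *: (X + Y)) =
   q8 *: (2%:R *: (X *m Y)).
  rewrite [X]mkK [Y]mkK mk1 !(mk_scale, mk_add, mk_mul, mk_sub).
  apply: mk_eq; rewrite !exprS expr0; ring.
apply: IdM_scale; apply: ZlM_scale; [zl | exact: ZlM_mul].
Qed.

Lemma Q_cg X Y : Q X -> cg 2%:R X Y -> Q Y.
Proof.
move=> [g [hg cgg]] hXY; exists g; split => //.
apply: (cg_trans cgg); rewrite /cg.
have -> : 1%:M + q4 *: X - (1%:M + q4 *: Y) = q4 *: (X - Y).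
  by rewrite scalerBr opprD addrACA subrr add0r.
rewrite [q8]exprSr; exact: IdM_scale2.
Qed.

Lemma Q_conj g X : H5 g -> ZlM X -> Q X -> Q (g *m X *m invmx g).
Proof.
move=> h5 hX [h [hh cgh]]; exists (g *m h *m invmx g); split; first exact: H_conj.
have -> : 1%:M + q4 *: (g *m X *m invmx g) = g *m (1%:M + q4 *: X) *m invmx g.
  by rewrite mulmxDr mulmxDl mulmx1 mulmxV ?H5_unit // -scalemxAr -scalemxAl.
have hZg := H5_ZlM h5; have hZi := H5_ZlM (H5_inv h5).
apply: cg_mul => //; last exact: cg_refl.
- apply: ZlM_mul => //; apply: ZlM_add; [exact: ZlM1 | apply: ZlM_scale => //; zl].
- apply: cg_mul => //; [exact: H5_ZlM (H_H5 hh)| exact: cg_refl].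
Qed.

Lemma Q_if (b : bool) X Y : ZlM X -> ZlM Y -> Q X -> Q Y -> Q (X + (b : nat)%:R *: Y).
Proof.
case: b => /= hX hY qX qY; last by rewrite scale0r addr0.
by rewrite scale1r; apply: Q_add.
Qed.

End B.

Section B2.
Variable R : realType.
Local Notation lam := (lam R).
Local Notation Zl := (@in_Zlam R).
Local Notation Id := (@in_ideal R).
Local Notation M := ('M[R]_2).
Local Notation H5 := (@in_H5 R).
Local Notation Ec := (@Ec R).
Local Notation Q := (@Q R).
Local Notation q4 := (2%:R ^+ 2 : R).
Local Notation q8 := (2%:R ^+ 3 : R).

Lemma e4 : (4%:R : R) = q4. Proof. by rewrite expr2 -natrM. Qed.
Lemma e8 : (8%:R : R) = q8. Proof. by rewrite !exprS expr0 mulr1 -!natrM. Qed.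

Lemma mxcgE m (A B : M) : mx_congr m A B <-> cg m A B.
Proof. by split => h i j; have := h i j; rewrite !mxE. Qed.

Lemma Q_sigma (s : M) : H 4%:R s ->
  mx_congr 8%:R s (\matrix_(i < 2, j < 2) (if i == j then 1 else if i == 0 then 4%:R else 0)) ->
  Q (mk 0 1 0 0).
Proof.
rewrite e4 e8 => hs /mxcgE hc; exists s; split => //.
have <- : (\matrix_(i < 2, j < 2) (if i == j then 1 else if i == 0 then q4 else 0)) =
  1%:M + q4 *: mk 0 1 0 0.
  rewrite mk1 mk_scale mk_add; apply/matrixP => i j; rewrite !mxE.
  by case: (ord2P i) => ->; case: (ord2P j) => ->; rewrite /= ?mulr0 ?mulr1 ?addr0 ?add0r.
exact: hc.
Qed.

Lemma Q_T4 : Q (mk 0 lam 0 0).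
Proof.
have e : Tmx R *m Tmx R *m Tmx R *m Tmx R = mk 1 (q4 * lam) 0 1.
  rewrite Tmk !mk_mul; apply: mk_eq; rewrite ?exprS ?expr0; ring.
exists (Tmx R *m Tmx R *m Tmx R *m Tmx R); split.
  apply/HE; split; first by repeat first [apply: (H5T R) | apply: H5_mul].
  rewrite e mk1 mk_sub; apply: IdM_mk;
   first [ by apply: (IdW (y := 0)); [zl | ring] | by apply: (IdW (y := lam)); [zl | ring]].
rewrite /cg e mk1 !(mk_scale, mk_add, mk_sub); apply: IdM_mk; apply: (IdW (y := 0)); try zl; ring.
Qed.

Ltac cgmk := rewrite /cg mk_sub; apply: IdM_mk.
Ltac w y := apply: (IdW (y := y)); [zl | try ring; ring: (lam2 R)].

Lemma Q_conj' (g X : M) : Q X -> H5 g -> ZlM X -> Q (g *m X *m invmx g).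
Proof. by move=> q h z; apply: Q_conj. Qed.
Lemma Q_add' (X Y : M) : Q X -> Q Y -> ZlM X -> ZlM Y -> Q (X + Y).
Proof. by move=> q1 q2 z1 z2; apply: Q_add. Qed.

Lemma ZlS : ZlM (Smx R). Proof. exact: H5_ZlM (H5S R). Qed.

Lemma Q_gens (s : M) : H 4%:R s ->
  mx_congr 8%:R s (\matrix_(i < 2, j < 2) (if i == j then 1 else if i == 0 then 4%:R else 0)) ->
  Q (mk 1 0 0 1) /\ Q (mk lam 0 0 lam) /\ Q (mk 0 1 0 0) /\ Q (mk 0 lam 0 0) /\
      Q (mk 0 0 1 0) /\ Q (mk 0 0 lam 0).
Proof.
move=> hs hc.
have Zmk : forall a b c d, Zl a -> Zl b -> Zl c -> Zl d -> ZlM (mk a b c d) by move=> *; apply: ZlM_mk.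
have q1 := Q_sigma hs hc.
have q2 := Q_T4.
have q3 : Q (mk 0 0 1 0).
  have := Q_conj' q1 (H5S R) (ltac:(apply: ZlM_mk; zl)).
  rewrite Sinv Smk !mk_mul => h; apply: (Q_cg h); cgmk; [w (0:R) | w (0:R) | w (-1:R) | w (0:R)].
have q4' : Q (mk 0 0 lam 0).
  have := Q_conj' q2 (H5S R) (ltac:(apply: ZlM_mk; zl)).
  rewrite Sinv Smk !mk_mul => h; apply: (Q_cg h); cgmk; [w (0:R) | w (0:R) | w (-lam) | w (0:R)].
have q5 : Q (mk lam (lam + 1) 1 lam).
  have := Q_conj' q3 (H5T R) (ltac:(apply: ZlM_mk; zl)).
  rewrite Tinv Tmk !mk_mul => h; apply: (Q_cg h); cgmk; [w (0:R) | w (- (lam + 1)) | w (0:R) | w (- lam)].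
have ql : Q (mk lam 0 0 lam).
  have h := Q_add' q5 q1 (ltac:(apply: ZlM_mk; zl)) (ltac:(apply: ZlM_mk; zl)); rewrite mk_add in h.
  have {}h := Q_add' h q2 (ltac:(apply: ZlM_mk; zl)) (ltac:(apply: ZlM_mk; zl)); rewrite mk_add in h.
  have {}h := Q_add' h q3 (ltac:(apply: ZlM_mk; zl)) (ltac:(apply: ZlM_mk; zl)); rewrite mk_add in h.
  apply: (Q_cg h); cgmk; [w (0:R) | w (lam + 1) | w (1:R) | w (0:R)].
have q6 : Q (mk (lam + 1) (lam + 1) (lam + 1) (lam + 1)).
  have := Q_conj' q5 (H5S R) (ltac:(apply: ZlM_mk; zl)).
  move=> h0; have := Q_conj' h0 (H5T R) (ltac:(apply: ZlM_mul; [apply: ZlM_mul; [exact: ZlS | apply: ZlM_mk; zl] | exact: (H5_ZlM (H5Si R))])).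
  rewrite Tinv Sinv Tmk Smk !mk_mul => h; apply: (Q_cg h); cgmk;
  [w (- lam - 1) | w (lam:R) | w (- lam - 1) | w (lam:R)].
have ql1 : Q (mk (lam + 1) 0 0 (lam + 1)).
  have h := Q_add' q6 q1 (ltac:(apply: ZlM_mk; zl)) (ltac:(apply: ZlM_mk; zl)); rewrite mk_add in h.
  have {}h := Q_add' h q2 (ltac:(apply: ZlM_mk; zl)) (ltac:(apply: ZlM_mk; zl)); rewrite mk_add in h.
  have {}h := Q_add' h q3 (ltac:(apply: ZlM_mk; zl)) (ltac:(apply: ZlM_mk; zl)); rewrite mk_add in h.
  have {}h := Q_add' h q4' (ltac:(apply: ZlM_mk; zl)) (ltac:(apply: ZlM_mk; zl)); rewrite mk_add in h.
  apply: (Q_cg h); cgmk; [w (0:R) | w (lam + 1) | w (lam + 1) | w (0:R)].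
have q11 : Q (mk 1 0 0 1).
  have h := Q_add' ql1 ql (ltac:(apply: ZlM_mk; zl)) (ltac:(apply: ZlM_mk; zl)); rewrite mk_add in h.
  apply: (Q_cg h); cgmk; [w (lam:R) | w (0:R) | w (0:R) | w (lam:R)].
by do !split.
Qed.
End B2.

Section A.
Variable R : realType.
Local Notation lam := (lam R).
Local Notation Zl := (@in_Zlam R).
Local Notation M := ('M[R]_2).
Local Notation H5 := (@in_H5 R).
Local Notation Ec := (@Ec R).
Local Notation Q := (@Q R).

Variable s : M.
Hypothesis hs : H 4%:R s.
Hypothesis hc : mx_congr 8%:R s (\matrix_(i < 2, j < 2) (if i == j then 1 else if i == 0 then 4%:R else 0)).

Lemma Q_if' (b : bool) (X Y : M) : Q X -> Q Y -> ZlM X -> ZlM Y -> Q (X + (b : nat)%:R *: Y).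
Proof. by move=> q1 q2 z1 z2; apply: Q_if. Qed.

Lemma Q_Ec c : Q (Ec c).
Proof.
have [g1 [gl [g2 [g2l [g3 g3l]]]]] := Q_gens hs hc.
have Z : forall a b c d, Zl a -> Zl b -> Zl c -> Zl d -> ZlM (mk a b c d) by move=> *; apply: ZlM_mk.
case: c => [[[b0 b1] [b2 b3]] [b4 b5]].
have h := @Q0 R.
have {}h := Q_if' b0 h g1 (ltac:(apply: Z; zl)) (ltac:(apply: Z; zl)).
rewrite mk_scale mk_add in h.
have {}h := Q_if' b1 h gl (ltac:(apply: Z; zl)) (ltac:(apply: Z; zl)).
rewrite mk_scale mk_add in h.
have {}h := Q_if' b2 h g2 (ltac:(apply: Z; zl)) (ltac:(apply: Z; zl)).
rewrite mk_scale mk_add in h.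
have {}h := Q_if' b3 h g2l (ltac:(apply: Z; zl)) (ltac:(apply: Z; zl)).
rewrite mk_scale mk_add in h.
have {}h := Q_if' b4 h g3 (ltac:(apply: Z; zl)) (ltac:(apply: Z; zl)).
rewrite mk_scale mk_add in h.
have {}h := Q_if' b5 h g3l (ltac:(apply: Z; zl)) (ltac:(apply: Z; zl)).
rewrite mk_scale mk_add in h.
move: h; rewrite /Ec /f2r /=; congr Q; apply: mk_eq; ring.
Qed.

Lemma classA n c : (2 <= n)%N -> exists r, H (2%:R ^+ n) r /\ cg (2%:R ^+ n.+1) r (1%:M + 2%:R ^+ n *: Ec c).
Proof.
elim: n => [|n IH] // hn.
have [->|hn1] : n = 1%N \/ (2 <= n)%N by lia.
  exact: Q_Ec.
have [r [hr hcr]] := IH hn1.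
have [h1 h2] := step hn1 hr hcr.
by exists (r *m r).
Qed.
End A.

Section Idx.
Variable R : realType.
Local Notation M := ('M[R]_2).

Definition sgrp (G : M -> Prop) := [/\ G 1%:M, (forall a b, G a -> G b -> G (a *m b)),
  (forall a, G a -> G (invmx a)) & (forall a, G a -> a \in unitmx)].

Lemma has_index_fin (T : finType) (r : T -> M) (G K : M -> Prop) :
  (forall t, G (r t)) -> (forall g, G g -> exists! t, K (invmx (r t) *m g)) ->
  has_index G K #|T|.
Proof.
move=> hG hU; exists (fun i => r (enum_val i)); split => // g /hU [t [ht u]].
exists (enum_rank t); split; first by rewrite enum_rankK.
by move=> i /u ->; rewrite enum_valK.
Qed.

Lemma inv_mulE (x y z : M) : x \in unitmx -> y \in unitmx ->
  invmx (invmx x *m y) *m (invmx x *m z) = invmx y *m z.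
Proof.
move=> ux uy; rewrite invmxM ?unitmx_inv // invmxK mulmxA -(mulmxA _ x).
by rewrite mulmxV // mulmx1.
Qed.

Lemma index_le G K a b : sgrp G -> sgrp K -> (forall x, K x -> G x) ->
  has_index G K a -> has_index G K b -> (a <= b)%N.
Proof.
move=> [G1 GM GV GU] [K1 KM KV KU] KG [r [hr hu]] [r' [hr' hu']].
have ex1 : forall g, G g -> exists j, K (invmx (r' j) *m g).
  by move=> g /hu' [j [hj _]]; exists j.
pose f (i : 'I_a) : 'I_b := sval (boolp.cid (ex1 _ (hr i))).
have hf i : K (invmx (r' (f i)) *m r i) := svalP (boolp.cid (ex1 _ (hr i))).
have finj : injective f.
  move=> i i' e.
  have k1 := hf i; have k2 := hf i'; rewrite -e in k2.
  have k3 : K (invmx (r i) *m r i').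
    rewrite -(@inv_mulE (r' (f i)) (r i) (r i') (GU _ (hr' _)) (GU _ (hr _))).
    by apply: KM => //; apply: KV.
  have [j [_ uj]] := hu _ (hr i').
  rewrite -(uj i k3); apply: uj.
  by rewrite mulVmx ?(GU _ (hr _)).
by have := leq_card f finj; rewrite !card_ord.
Qed.
End Idx.

Section Idx2.
Variable R : realType.
Local Notation M := ('M[R]_2).

Lemma index_uniq (G K : M -> Prop) a b : sgrp G -> sgrp K -> (forall x, K x -> G x) ->
  has_index G K a -> has_index G K b -> a = b.
Proof.
move=> sG sK KG ha hb; apply/eqP; rewrite eqn_leq.
by rewrite (index_le sG sK KG ha hb) (index_le sG sK KG hb ha).
Qed.

Lemma index_tower (G H K : M -> Prop) k m : sgrp G -> sgrp H -> sgrp K ->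
  (forall x, K x -> H x) -> (forall x, H x -> G x) ->
  has_index G H k -> has_index H K m -> has_index G K (k * m).
Proof.
move=> [G1 GM GV GU] [H1 HM HV HU] [K1 KM KV KU] KH HG [r [hr hu]] [s [hs hv]].
have -> : (k * m)%N = #|{: 'I_k * 'I_m}| by rewrite card_prod !card_ord.
apply: (has_index_fin (r := fun p => r p.1 *m s p.2)).
  by move=> [i j]; apply: (GM) => //; apply: (HG).
move=> g hg; have [i [hi ui]] := hu g hg.
have [j [hj uj]] := hv _ hi.
have e : forall i' j', invmx (r i' *m s j') *m g = invmx (s j') *m (invmx (r i') *m g).
  move=> i' j'; rewrite invmxM ?mulmxA //; [apply: (GU); apply: hr | apply: (GU); apply: (HG); apply: hs].
exists (i, j); split; first by rewrite e.
move=> [i' j'] /=; rewrite e => hk.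
have hi' : H (invmx (r i') *m g).
  have -> : invmx (r i') *m g = s j' *m (invmx (s j') *m (invmx (r i') *m g)).
    by rewrite mulKVmx //; apply: (HU); apply: hs.
  by apply: (HM) => //; apply: (KH).
have ei := ui _ hi'; subst i'.
by rewrite (uj _ hk).
Qed.

Lemma index_select (G H K : M -> Prop) N : sgrp G -> sgrp H -> sgrp K ->
  (forall x, K x -> H x) -> (forall x, H x -> G x) ->
  has_index G K N -> exists k, has_index G H k.
Proof.
move=> [G1 GM GV GU] [H1 HM HV HU] [K1 KM KV KU] KH HG [r [hr hu]].
pose eqv (i j : 'I_N) := boolp.asbool (H (invmx (r i) *m r j)).
have eqvP i j : eqv i j <-> H (invmx (r i) *m r j) by split => [/boolp.asboolP|/boolp.asboolP].
have eqv_sym i j : eqv i j -> eqv j i.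
  move/eqvP => h; apply/eqvP.
  have -> : invmx (r j) *m r i = invmx (invmx (r i) *m r j).
    by rewrite invmxM ?unitmx_inv ?GU ?hr // invmxK.
  exact: HV.
have eqv_trans i j l : eqv i j -> eqv j l -> eqv i l.
  move/eqvP => h1 /eqvP h2; apply/eqvP.
  have -> : invmx (r i) *m r l = (invmx (r i) *m r j) *m (invmx (r j) *m r l).
    by rewrite mulmxA -(mulmxA _ (r j)) mulmxV ?GU ?hr // mulmx1.
  exact: HM.
pose D := [pred i : 'I_N | [forall j, eqv j i ==> (i <= j)%N]].
exists #|{: {i : 'I_N | D i}}|.
apply: (has_index_fin (r := fun t => r (sval t))); first by move=> t; apply: hr.
move=> g hg; have [i0 [hi0 _]] := hu g hg.
have refl : eqv i0 i0.
  apply/eqvP; rewrite mulVmx ?GU ?hr //.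
case: (@arg_minnP _ i0 (fun j => eqv j i0) (fun j : 'I_N => nat_of_ord j) refl) => i hi imin.
have Di : D i.
  apply/forallP => j; apply/implyP => hj; apply: imin; exact: eqv_trans hj hi.
exists (exist _ i Di); split => /=.
  have -> : invmx (r i) *m g = (invmx (r i) *m r i0) *m (invmx (r i0) *m g).
    by rewrite mulmxA -(mulmxA _ (r i0)) mulmxV ?GU ?hr // mulmx1.
  by apply: (HM); [apply/eqvP | apply: (KH)].
move=> [i' Di'] /= hi'.
have hii' : eqv i i'.
  apply/eqvP.
  have <- : (invmx (r i) *m g) *m invmx (invmx (r i') *m g) = invmx (r i) *m r i'.
    rewrite invmxM ?unitmx_inv ?GU ?hr // invmxK mulmxA -(mulmxA _ g) mulmxV ?GU // mulmx1 //.
  apply: (HM) => //; last exact: HV.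
  have -> : invmx (r i) *m g = (invmx (r i) *m r i0) *m (invmx (r i0) *m g).
    by rewrite mulmxA -(mulmxA _ (r i0)) mulmxV ?GU ?hr // mulmx1.
  by apply: (HM); [apply/eqvP | apply: (KH)].
apply: val_inj => /=; apply: val_inj => /=; apply/eqP; rewrite eqn_leq.
move/forallP: Di => /(_ i') /implyP /(_ (eqv_sym _ _ hii')) ->.
by move/forallP: Di' => /(_ i) /implyP /(_ hii') ->.
Qed.

Lemma index_iff (G H K : M -> Prop) m : sgrp G -> sgrp H -> sgrp K ->
  (forall x, K x -> H x) -> (forall x, H x -> G x) ->
  has_index H K m -> (0 < m)%N -> forall k, has_index G H k <-> has_index G K (k * m).
Proof.
move=> sG sH sK KH HG hm m0 k; split => h; first exact: index_tower hm.
have KG : forall x, K x -> G x by move=> x /KH /HG.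
have [k' hk'] := index_select sG sH sK KH HG h.
have := index_uniq sG sK KG (index_tower sG sH sK KH HG hk' hm) h.
by move/eqP; rewrite eqn_pmul2r // => /eqP <-.
Qed.
End Idx2.

Lemma sgrpH (R : realType) (m : R) : sgrp (H m).
Proof.
split; [exact: H_one | move=> a b; exact: H_mul | move=> a; exact: H_inv | ].
by move=> a h; apply: H5_unit; apply: H_H5 h.
Qed.

Lemma sgrpH5 (R : realType) : sgrp (@in_H5 R).
Proof.
split; [exact: H5_one | move=> a b; exact: H5_mul | move=> a; exact: H5_inv | ].
by move=> a h; apply: H5_unit.
Qed.

Lemma Hincl (R : realType) n (x : 'M[R]_2) : H (2%:R ^+ n.+1) x -> H (2%:R ^+ n) x.
Proof. by move=> h; apply: (H_weak (k := 2%:R)); [zl | rewrite -exprSr]. Qed.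

Theorem corollary4p3 (R : realType) :
  (exists sigma : 'M[R]_2, H 4%:R sigma /\
     mx_congr 8%:R sigma (\matrix_(i < 2, j < 2)
        (if i == j then 1 else if i == 0 then 4%:R else 0))) ->
  (forall n : nat, (2 <= n)%N ->
     @has_index R (H (2%:R ^+ n)) (H (2%:R ^+ n.+1)) (2 ^ 6)%N) /\
  (forall n : nat, (2 <= n)%N -> forall k : nat,
     @has_index R (@in_H5 R) (H 4%:R) k <->
     @has_index R (@in_H5 R) (H (2%:R ^+ n)) (2 ^ (6 * (n - 2)) * k)%N).
Proof.
move=> [s [hs hc]].
have part1 : forall n : nat, (2 <= n)%N ->
     @has_index R (H (2%:R ^+ n)) (H (2%:R ^+ n.+1)) (2 ^ 6)%N.
  move=> n hn.
  have ex := fun c => classA hs hc c hn.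
  pose r c := sval (boolp.cid (ex c)).
  have hr c : H (2%:R ^+ n) (r c) /\ cg (2%:R ^+ n.+1) (r c) (1%:M + 2%:R ^+ n *: Ec R c).
    exact: (svalP (boolp.cid (ex c))).
  have -> : (2 ^ 6)%N = #|{: Cls}| by rewrite !card_prod card_bool.
  apply: (has_index_fin (r := r)); first by move=> c; case: (hr c).
  move=> g hg.
  have hn1 : (1 <= n)%N by apply: leq_trans hn.
  have [c hgc] := classB hn1 hg.
  have h5g := H_H5 hg.
  exists c; split.
    apply/(H_coset _ (H_H5 (hr c).1) h5g).
    exact: (cg_trans hgc (cg_sym (hr c).2)).
  move=> c' /(H_coset _ (H_H5 (hr c').1) h5g) h.
  apply: (classC (n := n)).
  exact: (cg_trans (cg_sym hgc) (cg_trans h (hr c').2)).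
split => //.
elim=> [|n IH] // hn.
have [->|hn1] : n = 1%N \/ (2 <= n)%N by lia.
  by move=> k; rewrite /= mul1n (e4 R).
move=> k.
rewrite (IH hn1 k).
have -> : (2 ^ (6 * (n.+1 - 2)) * k = 2 ^ (6 * (n - 2)) * k * 2 ^ 6)%N.
  have -> : (6 * (n.+1 - 2) = 6 * (n - 2) + 6)%N by lia.
  by rewrite expnD mulnAC.
apply: (index_iff (sgrpH5 R) (sgrpH _) (sgrpH _)).
- exact: Hincl.
- by move=> x; apply: H_H5.
- exact: part1.
- by rewrite expn_gt0.
Qed.
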